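(* Let $\mathbb{F}$ be a field of characteristic $2$ with algebraic closure $\overline{\mathbb{F}}$, let $V$ be an $n$-dimensional $\mathbb{F}$-vector space and $b$ a non-degenerate symmetric bilinear form on $V$ with quadratic form $Q: x\mapsto b(x,x)$. Let $V_1, V_2$ be linear subspaces of $V$ such that $b_a(v_1,v_2)=0$ for all $v_1\in V_1$, $v_2\in V_2$, and assume $\dim V_1 + \dim V_2 > n$. Then: (1) $n$ is odd and the Witt index of $b$ equals $\frac{n-1}{2}$; (2) both $V_1$ and $V_2$ contain $(\operatorname{Ker} Q)^\perp$; (3) $\dim V_1 + \dim V_2 = n+1$.
   Context: Every $\alpha\in\overline{\mathbb{F}}$ has a unique square root $\sqrt{\alpha}\in\overline{\mathbb{F}}$. The a-transform of $b$ is the map $b_a : V^2 \to \overline{\mathbb{F}}$, $b_a(x,y) := b(x,y) + \sqrt{Q(x)Q(y)}$. $\operatorname{Ker} Q = \{x\in V: Q(x)=0\}$ (a linear subspace in characteristic $2$), and $X^\perp = \{y\in V : b(x,y)=0\ \forall x\in X\}$. The Witt index of $b$ is the greatest dimension of a subspace on which $b$ vanishes identically. *)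

(* Defs.v *)
From HB Require Import structures.
From mathcomp Require Import all_boot all_order all_algebra all_field.
Set Implicit Arguments. Unset Strict Implicit. Unset Printing Implicit Defensive.
Import GRing.Theory.
Local Open Scope ring_scope.

(* Square roots in an algebraically closed field (unique in characteristic 2). *)
Lemma sqrt_exists (L : closedFieldType) (a : L) : exists y : L, y ^+ 2 == a.
Proof.
have [y Hy] := @solve_monicpoly L 2 (nth 0 [:: a]) isT.
exists y; apply/eqP; rewrite Hy big_ord_recl big_ord_recl big_ord0 /=.
by rewrite expr0 mulr1 mul0r !addr0.
Qed.

Definition sqrtL (L : closedFieldType) (a : L) : L := xchoose (sqrt_exists a).

Definition qform (F : fieldType) (V : vectType F) (b : V -> V -> F) (x : V) : F :=
  b x x.

Definition a_transform (F : fieldType) (L : closedFieldType) (iota : {rmorphism F -> L})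
  (V : vectType F) (b : V -> V -> F) (x y : V) : L :=
  iota (b x y) + sqrtL (iota (qform b x * qform b y)).

Definition totally_isotropic (F : fieldType) (V : vectType F) (b : V -> V -> F)
  (U : {vspace V}) : Prop :=
  forall x y, x \in U -> y \in U -> b x y = 0.

Definition is_witt_index (F : fieldType) (V : vectType F) (b : V -> V -> F) (k : nat) : Prop :=
  (exists U : {vspace V}, totally_isotropic b U /\ \dim U = k) /\
  (forall U : {vspace V}, totally_isotropic b U -> (\dim U <= k)%N).

Definition kerQ (F : fieldType) (V : vectType F) (b : V -> V -> F) : pred V :=
  fun x => qform b x == 0.

Definition perp (F : fieldType) (V : vectType F) (b : V -> V -> F) (X : pred V) : V -> Prop :=
  fun y => forall x, X x -> b x y = 0.

(* Main.v *)
Require Import Defs.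
From HB Require Import structures.
From mathcomp Require Import all_boot all_order all_algebra all_field.
From Stdlib Require Import Classical.
From mathcomp Require Import zify ring.
Set Implicit Arguments. Unset Strict Implicit. Unset Printing Implicit Defensive.
Import GRing.Theory.
Local Open Scope ring_scope.

Ltac clia := repeat match goal with H : ?T |- _ =>
  lazymatch type of T with Prop =>
    lazymatch T with
    | is_true (leq _ _) => fail
    | @eq nat _ _ => fail
    | _ => clear H
    end
  end end; lia.

Section Forms.
Variables (F : fieldType) (V : vectType F) (b : {bilinear V -> V -> F^o}).

Lemma dim_addl (U : {vspace V}) v : v \notin U -> \dim (U + <[v]>)%VS = (\dim U).+1.
Proof.
move=> vU.
have v0 : v != 0 by apply: contraNneq vU => ->; rewrite mem0v.
have H := dimv_sum_cap U <[v]>; rewrite dim_vline v0 in H.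
suff : \dim (U :&: <[v]>)%VS = 0%N by move=> E; rewrite E addn0 in H; rewrite H addn1.
apply/eqP; rewrite dimv_eq0; apply/eqP/subv_anti/andP; split; last exact: sub0v.
apply/subvP => w /memv_capP [wU /vlineP [k wk]].
rewrite memv0; apply/eqP; subst w.
have [->|k0] := eqVneq k 0; first by rewrite scale0r.
by move: wU => /(memvZ k^-1); rewrite scalerA mulVf // scale1r (negPf vU).
Qed.

Definition hyp (u : V) : {vspace V} := lker (linfun (b u : V -> F^o)).

Lemma mem_hyp u y : (y \in hyp u) = (b u y == 0).
Proof. by rewrite memv_ker lfunE. Qed.

Lemma dim_hyp (X : {vspace V}) u : ((\dim X).-1 <= \dim (X :&: hyp u))%N.
Proof.
rewrite -(limg_ker_dim (linfun (b u : V -> F^o)) X).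
have := dimvS (subvf (linfun (b u : V -> F^o) @: X)); rewrite dimvf.
rewrite -/(hyp u).
case: (\dim (linfun _ @: X)) => [|[|m]] H; first by rewrite addn0 leq_pred.
  by rewrite addn1.
by move: H; rewrite ltnS.
Qed.

Definition perpv (U : {vspace V}) : {vspace V} :=
  (\bigcap_(i < \dim U) hyp (vbasis U)`_i)%VS.

Lemma mem_perpv (U : {vspace V}) y : reflect (forall u, u \in U -> b u y = 0) (y \in perpv U).
Proof.
apply: (iffP idP).
  move=> /subv_bigcapP H u /coord_vbasis ->.
  rewrite linear_sumlz big1 //= => i _.
  have := H i isT; rewrite -memvE mem_hyp => /eqP.
  by rewrite linearZl_LR /= => ->; rewrite scaler0.
move=> H; apply/subv_bigcapP => i _; rewrite -memvE mem_hyp H //.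
by rewrite vbasis_mem // mem_nth // size_tuple.
Qed.

Lemma dim_bigcap_hyp k (g : nat -> V) :
  (\dim (fullv : {vspace V}) - k <= \dim (\bigcap_(i < k) hyp (g i))%VS)%N.
Proof.
elim: k => [|k IH]; first by rewrite big_ord0 subn0.
rewrite big_ord_recr /=.
apply: leq_trans (dim_hyp _ _).
move: IH; set d := \dim _; set e := \dim _; lia.
Qed.

Lemma perpv_ge (U : {vspace V}) : (\dim (fullv : {vspace V}) - \dim U <= \dim (perpv U))%N.
Proof. exact: (dim_bigcap_hyp (\dim U) (fun i => (vbasis U)`_i)). Qed.

Hypothesis bsym : forall x y : V, b x y = b y x.
Hypothesis bnondeg : forall x : V, (forall y : V, b x y = 0) -> x = 0.

Lemma perpv_dim (U : {vspace V}) : \dim (perpv U) = (\dim (fullv : {vspace V}) - \dim U)%N.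
Proof.
set C := U^C%VS.
have H0 : (perpv U :&: perpv C = 0)%VS.
  apply/eqP; rewrite -subv0; apply/subvP => y /memv_capP [/mem_perpv H1 /mem_perpv H2].
  rewrite memv0; apply/eqP; apply: bnondeg => x; rewrite bsym.
  have : x \in (U + C)%VS by rewrite addv_complf memvf.
  case/memv_addP => u uU [c cC ->].
  by rewrite linearDl /= H1 // H2 // addr0.
have := dimv_sum_cap (perpv U) (perpv C); rewrite H0 dimv0 addn0.
have := dimvS (subvf (perpv U + perpv C)).
have := perpv_ge U; have := perpv_ge C; rewrite dimv_compl.
have := dimvS (subvf U).
lia.
Qed.

Lemma perpvK (U : {vspace V}) : perpv (perpv U) = U.
Proof.
apply/eqP; rewrite eq_sym eqEdim; apply/andP; split.
  apply/subvP => u uU; apply/mem_perpv => y /mem_perpv H.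
  by rewrite bsym H.
rewrite !perpv_dim.
have := dimvS (subvf U); lia.
Qed.
End Forms.
Section Lagr.
Variables (F : fieldType) (V : vectType F) (b : {bilinear V -> V -> F^o}) (s : V -> V).
Hypothesis sD : forall x y, s (x + y) = s x + s y.
Hypothesis sZ : forall (c : F) x, s (c *: x) = c *: s x.
Definition af x y : F := b (s x) y.
Hypothesis askew : forall x y, af x y = - af y x.

Lemma afDl x y z : af (x + y) z = af x z + af y z.
Proof. by rewrite /af sD linearDl. Qed.
Lemma afZl c x z : af (c *: x) z = c * af x z.
Proof. by rewrite /af sZ linearZl_LR. Qed.
Lemma afDr x y z : af x (y + z) = af x y + af x z.
Proof. by rewrite /af linearDr. Qed.
Lemma afZr c x z : af x (c *: z) = c * af x z.
Proof. by rewrite /af linearZ. Qed.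
Lemma afNr x z : af x (- z) = - af x z.
Proof. by rewrite /af linearN. Qed.

Definition lagr_concl (W R : {vspace V}) :=
  exists U : {vspace V}, [/\ (R <= U)%VS, (U <= W)%VS,
    (forall x y, x \in U -> y \in U -> af x y = 0) & (2 * \dim U = \dim W + \dim R)%N].

Lemma lagr_base (W R : {vspace V}) : (W <= R)%VS -> (R <= W)%VS ->
  (forall r w, r \in R -> w \in W -> af r w = 0) -> lagr_concl W R.
Proof.
move=> WR RW hrad.
have E : R = W by apply/subv_anti/andP.
subst R; exists W; split => //; last lia.
Qed.

Lemma lagr k : forall (W R : {vspace V}), (\dim W <= k)%N -> (R <= W)%VS ->
  (forall r w, r \in R -> w \in W -> af r w = 0) ->
  (forall x, x \in W -> (forall w, w \in W -> af x w = 0) -> x \in R) ->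
  (forall x, x \in W -> af x x = 0) -> lagr_concl W R.
Proof.
elim: k => [|k IH] W R hW hRW hrad hmax halt.
  apply: lagr_base => //.
  have /eqP -> : W == 0%VS by rewrite -dimv_eq0 -leqn0.
  exact: sub0v.
case: (boolP (W <= R)%VS) => WR; first exact: lagr_base.
case/subvPn: WR => x xW xR.
have : exists y0, y0 \in W /\ af x y0 != 0.
  apply: NNPP => Hn; move/negP: xR; apply; apply: hmax => // w wW; apply/eqP.
  by apply: contraT => ne; exfalso; apply: Hn; exists w.
case=> y0 [y0W axy0].
set y := (af x y0)^-1 *: y0.
have yW : y \in W by rewrite memvZ.
have axy : af x y = 1 by rewrite afZr mulVf.
clearbody y.
have ayx : af y x = -1 by rewrite askew axy.
have axx := halt x xW.
have ayy := halt y yW.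
set W' := (W :&: hyp b (s x) :&: hyp b (s y))%VS.
have memW' z : (z \in W') = [&& z \in W, af x z == 0 & af y z == 0].
  by rewrite !memv_cap !mem_hyp andbA.
have W'W : (W' <= W)%VS by apply/subvP => z; rewrite memW' => /and3P[].
have xW' : x \notin W' by rewrite memW' ayx oppr_eq0 oner_eq0 !andbF.
have yW'x : y \notin (W' + <[x]>)%VS.
  apply/negP => /memv_addP [w wW' [c /vlineP [d ->] E]].
  move: axy; rewrite E afDr afZr axx mulr0 addr0.
  move: wW'; rewrite memW' => /and3P [_ /eqP -> _] /eqP.
  by rewrite eq_sym oner_eq0.
have Wdec z : z \in W -> z - af x z *: y + af y z *: x \in W'.
  move=> zW; rewrite memW'; apply/and3P; split.
  - by rewrite memvD ?memvB ?memvZ.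
  - by rewrite !afDr afNr !afZr axy axx; apply/eqP; ring.
  - by rewrite !afDr afNr !afZr ayy ayx; apply/eqP; ring.
have WE : W = (W' + <[x]> + <[y]>)%VS.
  apply/subv_anti/andP; split.
    apply/subvP => z zW.
    have -> : z = (z - af x z *: y + af y z *: x) + (- af y z) *: x + af x z *: y.
      by rewrite scaleNr; rewrite addrK subrK.
    by rewrite memv_add ?memv_add ?Wdec // memvZ // memv_line.
  by rewrite !subv_add W'W -!memvE xW yW.
have dimW : \dim W = (\dim W').+2.
  by rewrite {1}WE dim_addl // dim_addl.
have RW' : (R <= W')%VS.
  apply/subvP => r rR; have rW := subvP hRW r rR.
  by rewrite memW' rW askew (hrad r x) // askew (hrad r y) // oppr0 eqxx.
have [U' [RU' U'W' iso' dimU']] : lagr_concl W' R.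
apply: (IH W' R); [ | exact: RW' | | | ].
- by move: hW; rewrite dimW; clia.
- by move=> r w rR /(subvP W'W); apply: hrad.
- move=> z zW' H; apply: hmax; first exact: (subvP W'W).
  move=> w; rewrite WE => /memv_addP [w1 /memv_addP [w2 w2W' [c /vlineP [d ->] ->]]].
  move=> [e /vlineP [f ->] ->].
  move: zW'; rewrite memW' => /and3P [_ /eqP zx /eqP zy].
  by rewrite !afDr !afZr H // askew zx askew zy oppr0 !mulr0 !addr0.
- by move=> z /(subvP W'W); apply: halt.
exists (U' + <[x]>)%VS; split.
- exact: subv_trans RU' (addvSl _ _).
- by rewrite subv_add -memvE xW (subv_trans U'W' W'W).
- move=> u v /memv_addP [u1 u1U' [c /vlineP [d ->] ->]].
  move=> /memv_addP [v1 v1U' [e /vlineP [f ->] ->]].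
  have u1W' := subvP U'W' u1 u1U'; have v1W' := subvP U'W' v1 v1U'.
  move: u1W' v1W'; rewrite !memW' => /and3P [_ /eqP xu1 _] /and3P [_ /eqP xv1 _].
  rewrite !afDl !afZl !afDr !afZr iso' // askew xu1 xv1 axx; ring.
- rewrite dim_addl; last by apply: contra xW'; apply: (subvP U'W').
  move: dimU'; rewrite dimW; clia.
Qed.
End Lagr.

Section Char2.
Variables (F : fieldType) (HF : 2%N \in [pchar F]).
Lemma sq0 (s : F) : s ^+ 2 = 0 -> s = 0.
Proof. by move/eqP; rewrite expf_eq0 /= => /eqP. Qed.
Lemma sqr_inj (s t : F) : s ^+ 2 = t ^+ 2 -> s = t.
Proof.
move=> E.
have : (s + t) ^+ 2 = 0.
  by rewrite sqrrD -mulr_natr (pcharf0 HF) mulr0 addr0 E addrr_pchar2.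
move/sq0/eqP; rewrite addr_eq0 => /eqP ->; exact: oppr_pchar2.
Qed.
End Char2.

Theorem lemma4p7
  (F : fieldType) (HF : 2%N \in [pchar F])
  (L : closedFieldType) (iota : {rmorphism F -> L})
  (Lalg : forall z : L, exists p : {poly F}, p != 0 /\ root (map_poly iota p) z)
  (V : vectType F) (n : nat) (Hn : \dim (fullv : {vspace V}) = n)
  (b : {bilinear V -> V -> F^o})
  (bsym : forall x y : V, b x y = b y x)
  (bnondeg : forall x : V, (forall y : V, b x y = 0) -> x = 0)
  (V1 V2 : {vspace V})
  (Horth : forall v1 v2 : V, v1 \in V1 -> v2 \in V2 -> a_transform iota b v1 v2 = 0)
  (Hdim : (\dim V1 + \dim V2 > n)%N) :
  [/\ (odd n /\ is_witt_index b n.-1./2),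
      (forall y : V, perp b (kerQ b) y -> y \in V1 /\ y \in V2)
    & (\dim V1 + \dim V2 = n.+1)%N].
Proof.
have key : forall x y, x \in V1 -> y \in V2 -> b x y ^+ 2 = b x x * b y y.
  move=> x y xV1 yV2; have := Horth x y xV1 yV2; rewrite /a_transform /qform /sqrtL.
  set c := iota (b x x * b y y).
  have /eqP sq := xchooseP (sqrt_exists c).
  move/eqP; rewrite addr_eq0 => /eqP E.
  by apply: (fmorph_inj iota); rewrite rmorphXn E sqrrN sq.
have pd := perpv_dim bsym bnondeg.
rewrite Hn in pd.
have dimle (U : {vspace V}) : (\dim U <= n)%N by rewrite -Hn dimvS ?subvf.
have [x0 [y0 [x0V1 y0V2 bxy0]]] : exists x0 y0, [/\ x0 \in V1, y0 \in V2 & b x0 y0 != 0].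
  apply: NNPP => Hn'.
  have : (V2 <= perpv b V1)%VS.
    apply/subvP => y yV2; apply/mem_perpv => x xV1; apply/eqP; apply: contraT => ne.
    by exfalso; apply: Hn'; exists x, y; split.
  move/dimvS; rewrite pd; have := dimle V1; clia.
have : b x0 x0 * b y0 y0 != 0 by rewrite -key // expf_neq0.
rewrite mulf_eq0 negb_or => /andP [Qx0 Qy0].
have sq0 := sq0 (F:=F). have sqr_inj := sqr_inj HF.
set K1 := (V1 :&: hyp b y0)%VS.
set K2 := (V2 :&: hyp b x0)%VS.
have memK1 k : (k \in K1) = (k \in V1) && (b y0 k == 0) by rewrite memv_cap mem_hyp.
have memK2 k : (k \in K2) = (k \in V2) && (b x0 k == 0) by rewrite memv_cap mem_hyp.
have K1Q k : k \in K1 -> b k k = 0.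
  rewrite memK1 => /andP [kV1 /eqP bk].
  have := key k y0 kV1 y0V2; rewrite bsym bk expr0n /= => /esym /eqP.
  by rewrite mulf_eq0 (negPf Qy0) orbF => /eqP.
have K2Q k : k \in K2 -> b k k = 0.
  rewrite memK2 => /andP [kV2 /eqP bk].
  have := key x0 k x0V1 kV2; rewrite bk expr0n /= => /esym /eqP.
  by rewrite mulf_eq0 (negPf Qx0) /= => /eqP.
have K1V1 : (K1 <= V1)%VS by apply/subvP => k; rewrite memK1 => /andP[].
have K2V2 : (K2 <= V2)%VS by apply/subvP => k; rewrite memK2 => /andP[].
have V2K1 : (V2 <= perpv b K1)%VS.
  apply/subvP => y yV2; apply/mem_perpv => k kK1; apply: sq0.
  by rewrite key ?(subvP K1V1) // K1Q // mul0r.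
have V1K2 : (V1 <= perpv b K2)%VS.
  apply/subvP => x xV1; apply/mem_perpv => k kK2; apply: sq0.
  by rewrite bsym key ?(subvP K2V2) // (K2Q k kK2) mulr0.
have dK1 := dim_hyp b V1 y0.
have dK2 := dim_hyp b V2 x0.
have dV2 := dimvS V2K1; have dV1 := dimvS V1K2.
rewrite pd in dV1; rewrite pd in dV2.
rewrite -/K1 in dK1; rewrite -/K2 in dK2.
have dimsum : (\dim V1 + \dim V2 = n.+1)%N.
  by move: (dimle K1) (dimle K2); clia.
have dimK2 : \dim K2 = (\dim V2).-1 by move: (dimle K1) (dimle K2); clia.
have dimK1 : \dim K1 = (\dim V1).-1 by move: (dimle K1) (dimle K2); clia.
have EV1 : V1 = perpv b K2.
  apply/eqP; rewrite eqEdim V1K2 pd dimK2; clia.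
have EV2 : V2 = perpv b K1.
  apply/eqP; rewrite eqEdim V2K1 pd dimK1; clia.
have part2 : forall y : V, perp b (kerQ b) y -> y \in V1 /\ y \in V2.
  move=> y Hy; rewrite EV1 EV2; split; apply/mem_perpv => k kK; apply: Hy;
    rewrite /kerQ /qform; apply/eqP; [exact: K2Q | exact: K1Q].
pose W := (V1 + V2)%VS.
have V1W : (V1 <= W)%VS by exact: addvSl.
have V2W : (V2 <= W)%VS by exact: addvSr.
have [z0 [z0V1 z0V2 qz0]] : exists z0, [/\ z0 \in V1, z0 \in V2 & b z0 z0 != 0].
  apply: NNPP => Hn'.
  have : (V1 :&: V2 <= perpv b W)%VS.
    apply/subvP => z /memv_capP [zV1 zV2].
    have Qz : b z z = 0.
      by apply/eqP; apply: contraT => ne; exfalso; apply: Hn'; exists z; split.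
    apply/mem_perpv => w /memv_addP [w1 w1V1 [w2 w2V2 ->]].
    rewrite linearDl /=.
    have -> : b w1 z = 0 by apply: sq0; rewrite key // Qz mulr0.
    have -> : b w2 z = 0 by apply: sq0; rewrite bsym key // Qz mul0r.
    by rewrite addr0.
  move/dimvS; rewrite pd /W; have := dimv_sum_cap V1 V2; have := dimle (V1 + V2)%VS; clia.
set q := b z0 z0.
pose s x := x + (b x z0 / q) *: z0.
have sD x y : s (x + y) = s x + s y.
  by rewrite /s linearDl /= mulrDl scalerDl addrACA.
have sZ (c : F) x : s (c *: x) = c *: s x.
  by rewrite /s linearZl_LR /= scalerDr scalerA mulrA.
have afE x y : af b s x y = b x y + b x z0 / q * b z0 y.
  by rewrite /af /s linearDl linearZl_LR.
have askew x y : af b s x y = - af b s y x.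
  rewrite oppr_pchar2 // !afE (bsym x y) (bsym x z0) (bsym z0 y); ring.
have qne : q != 0 by [].
have altV1 x : x \in V1 -> af b s x x = 0.
  move=> xV1; rewrite afE (bsym z0 x).
  have -> : b x z0 / q * b x z0 = b x z0 ^+ 2 / q by rewrite expr2 mulrAC.
  by rewrite key // -/q mulfK // addrr_pchar2.
have altV2 x : x \in V2 -> af b s x x = 0.
  move=> xV2; rewrite afE (bsym x z0).
  have -> : b z0 x / q * b z0 x = b z0 x ^+ 2 / q by rewrite expr2 mulrAC.
  by rewrite key // -/q mulrC mulKf // addrr_pchar2.
have halt x : x \in W -> af b s x x = 0.
  case/memv_addP => x1 x1V1 [x2 x2V2 ->].
  rewrite !(afDl b sD) !(afDr b s) altV1 // altV2 // (askew x2 x1).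
  by rewrite add0r addr0 subrr.
have z0W : z0 \in W := subvP V1W z0 z0V1.
have z0P : z0 \notin perpv b W.
  by apply/negP => /mem_perpv /(_ z0 z0W) /eqP; rewrite (negPf qne).
pose R := (perpv b W + <[z0]>)%VS.
have dimR : \dim R = (n - \dim W).+1 by rewrite dim_addl // pd.
have PW : (perpv b W <= W)%VS.
  apply/subvP => y /mem_perpv Hy.
  have : y \in perpv b V1 by apply/mem_perpv => u uV1; apply: Hy; exact: (subvP V1W).
  rewrite EV1 perpvK // => yK2.
  exact: (subvP V2W) (subvP K2V2 _ yK2).
have RW : (R <= W)%VS by rewrite subv_add PW -memvE.
have hrad r w : r \in R -> w \in W -> af b s r w = 0.
  case/memv_addP => d /mem_perpv dP [c /vlineP [e ->] ->] wW.
  rewrite (afDl b sD) (afZl b sZ) !afE (bsym d w) (bsym d z0) !dP // -/q mulfV //.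
  by rewrite mul1r addrr_pchar2 // !(mul0r, mulr0, add0r, addr0).
have hmax x : x \in W -> (forall w, w \in W -> af b s x w = 0) -> x \in R.
  move=> xW Hx.
  have -> : x = (x - (b x z0 / q) *: z0) + (b x z0 / q) *: z0 by rewrite subrK.
  apply: memv_add; last by rewrite memvZ // memv_line.
  apply/mem_perpv => u uW.
  rewrite linearBr linearZ /= (bsym u x) (bsym u z0) oppr_pchar2 // -afE.
  exact: Hx.
have [U [RU UW isoU dimU]] := lagr sD sZ askew (k := \dim W) (leqnn _) RW hrad hmax halt.
rewrite dimR in dimU.
have dWn := dimle W.
have dimU2 : (2 * \dim U = n.+1)%N by move: dimU dWn; clia.
have upper (U' : {vspace V}) : totally_isotropic b U' -> (2 * \dim U' <= n)%N.
  move=> iso; have : (U' <= perpv b U')%VS.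
    by apply/subvP => y yU; apply/mem_perpv => x xU; apply: iso.
  by move/dimvS; rewrite pd; clia.
set U0 := (U :&: hyp b z0)%VS.
have isoU0 : totally_isotropic b U0.
  move=> x y /memv_capP [xU _] /memv_capP [yU]; rewrite mem_hyp => /eqP bz0y.
  by have := isoU x y xU yU; rewrite afE bz0y mulr0 addr0.
have dU0 := dim_hyp b U z0; rewrite -/U0 in dU0.
have dU0' := upper U0 isoU0.
have nE : n = ((\dim U).-1).*2.+1 by rewrite -mul2n; clia.
split => //; split.
- by rewrite nE /= odd_double.
- rewrite nE /= doubleK; split.
    exists U0; split => //; move: dU0 dU0' dimU2; clia.
  by move=> U' /upper; rewrite nE -mul2n; clia.
Qed.
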